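(* Let $G$ be a graph on $n$ vertices with $n>2$ even, and let $k=n/2$. Then the complement map $\mathfrak{c}$ of $F_k(G)$ does not belong to $\iota(\operatorname{Aut}(G))=\{\iota(\phi):\phi\in\operatorname{Aut}(G)\}$.
   Context: $F_k(G)$ is the graph on the $k$-subsets of $V(G)$ in which $A,B$ are adjacent iff $A\triangle B$ is an edge of $G$. For $\phi\in\operatorname{Aut}(G)$, $\iota(\phi)$ is the automorphism of $F_k(G)$ mapping $A$ to $\{\phi(v):v\in A\}$. The complement map $\mathfrak{c}$ sends each $k$-subset $A$ of $V(G)$ to $V(G)\setminus A$; when $k=n/2$ it is an automorphism of $F_k(G)$. *)

(* Defs.v *)
From mathcomp Require Import all_boot all_fingroup.
Set Implicit Arguments. Unset Strict Implicit. Unset Printing Implicit Defensive.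

Definition simple_graph (V : finType) (e : rel V) : Prop :=
  symmetric e /\ irreflexive e.

Definition is_graph_aut (V : finType) (e : rel V) (phi : {perm V}) : Prop :=
  forall u v, e (phi u) (phi v) = e u v.

(* Vertices of the token graph F_k(G): k-subsets of V. *)
Definition ksubset (V : finType) (k : nat) (A : {set V}) : bool := #|A| == k.

Definition token_adj (V : finType) (e : rel V) (A B : {set V}) : bool :=
  [exists u, exists v, e u v && ((A :\: B) :|: (B :\: A) == [set u; v])].

Definition iota_map (V : finType) (phi : {perm V}) (A : {set V}) : {set V} :=
  phi @: A.

Definition compl_map (V : finType) (A : {set V}) : {set V} := ~: A.

(* Main.v *)
Require Import Defs.
From mathcomp Require Import all_boot all_fingroup.
Set Implicit Arguments. Unset Strict Implicit.

Lemma ext_card (V : finType) (S : {set V}) k :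
  #|S| <= k -> k <= #|V| -> exists A : {set V}, S \subset A /\ #|A| = k.
Proof.
move=> hS hk.
set m := k - #|S|.
have hm : m <= #|~: S| by rewrite cardsCs setCK /m leq_sub2r.
set s := take m (enum (~: S)).
have us : uniq s by rewrite take_uniq // enum_uniq.
have ss : size s = m by rewrite size_take -cardE; case: ltnP => // h; apply/eqP; rewrite eqn_leq h hm.
exists (S :|: [set y in s]); split; first exact: subsetUl.
have E0 : S :&: [set y in s] = set0.
  apply/setP => y; rewrite !inE; apply/negP => /andP [yS /mem_take].
  by rewrite mem_enum inE yS.
by rewrite cardsU E0 cards0 subn0 cardsE (card_uniqP us) ss /m subnKC.
Qed.

Theorem proposition6 (V : finType) (e : rel V) (n k : nat) :
  simple_graph e ->
  #|V| = n -> 2 < n -> ~~ odd n -> k = n./2 ->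
  ~ (exists phi : {perm V}, is_graph_aut e phi /\
       forall A : {set V}, ksubset k A -> iota_map phi A = compl_map A).
Proof.
move=> _ hV hn hodd hk [phi [_ H]].
have hk2 : 2 <= k by rewrite hk -(odd_double_half n) (negbTE hodd) /= in hn *; case: (n./2) hn => [|[|]].
have hkn : k <= #|V|.
  by rewrite hV hk -{2}(odd_double_half n) (negbTE hodd) add0n -addnn leq_addr.
have : 0 < #|V| by rewrite hV ltnW // ltnW.
case/card_gt0P => x _.
have [A [sA cA]] : exists A : {set V}, [set x; phi x] \subset A /\ #|A| = k.
  apply: ext_card => //; rewrite cards2; apply: leq_trans hk2; by case: (_ != _).
have := H A; rewrite /ksubset cA eqxx => /(_ isT).
rewrite /iota_map /compl_map => E.
have xA : x \in A by apply: (subsetP sA); rewrite !inE eqxx.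
have pA : phi x \in A by apply: (subsetP sA); rewrite !inE eqxx orbT.
have : phi x \in phi @: A by apply: imset_f.
by rewrite E inE pA.
Qed.
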